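(* There is a function $C_5(t)$ such that for every positive integer $t$ the following holds: every connected bipartite graph $G$ with $\delta(G)\geq C_5(t)$ which is induced $S_{t,t}$-free has diameter at most $5$.
   Context: For positive integers $a,b$, the biclaw $S_{a,b}$ is the graph with vertex set $\{x,x_1,\dots,x_a,y,y_1,\dots,y_b\}$ and edges $xy$, $xy_1,\dots,xy_b$, $yx_1,\dots,yx_a$. Induced $S_{t,t}$-free means no induced subgraph isomorphic to $S_{t,t}$. $\delta(G)$ is the minimum degree. *)

(* Defs.v *)
From mathcomp Require Import all_boot.
Set Implicit Arguments. Unset Strict Implicit. Unset Printing Implicit Defensive.

Definition simple_graph (T : finType) (e : rel T) : Prop :=
  symmetric e /\ irreflexive e.

Definition degree (T : finType) (e : rel T) (v : T) : nat := #|[set w | e v w]|.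

Definition min_degree_ge (T : finType) (e : rel T) (d : nat) : Prop :=
  forall v : T, d <= degree e v.

Definition connected_graph (T : finType) (e : rel T) : Prop :=
  forall x y : T, connect e x y.

Definition bipartite (T : finType) (e : rel T) : Prop :=
  exists c : T -> bool, forall x y, e x y -> c x != c y.

Definition dist_le (T : finType) (e : rel T) (x y : T) (k : nat) : Prop :=
  exists s : seq T, [/\ path e x s, last x s = y & size s <= k].

Definition diameter_le (T : finType) (e : rel T) (k : nat) : Prop :=
  forall x y : T, dist_le e x y k.

(* An induced copy of the biclaw S_{a,b}: vertices x, y, x_1..x_a (f), y_1..y_b (g),
   pairwise distinct, whose induced edges are exactly xy, x y_j, y x_i. *)
Definition induced_biclaw (T : finType) (e : rel T) (a b : nat)
  (x y : T) (f : 'I_a -> T) (g : 'I_b -> T) : Prop :=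
  (x != y) /\ injective f /\ injective g /\
  (forall i, f i != x /\ f i != y) /\
  (forall j, g j != x /\ g j != y) /\
  (forall i j, f i != g j) /\
  e x y /\ (forall j, e x (g j)) /\ (forall i, e y (f i)) /\
  (forall i, ~~ e x (f i)) /\ (forall j, ~~ e y (g j)) /\
  (forall i i', ~~ e (f i) (f i')) /\ (forall j j', ~~ e (g j) (g j')) /\
  (forall i j, ~~ e (f i) (g j)).

Definition has_induced_biclaw (T : finType) (e : rel T) (a b : nat) : Prop :=
  exists x y (f : 'I_a -> T) (g : 'I_b -> T), induced_biclaw e x y f g.

Definition induced_free_biclaw (T : finType) (e : rel T) (a b : nat) : Prop :=
  ~ has_induced_biclaw e a b.

(* Main.v *)
Require Import Defs.
From mathcomp Require Import all_boot.
From mathcomp Require Import zify.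
From Stdlib Require Import Classical.
Set Implicit Arguments. Unset Strict Implicit. Unset Printing Implicit Defensive.

Definition Nb (T : finType) (e : rel T) (v : T) : {set T} := [set w | e v w].

Lemma same_col (T : finType) (e : rel T) (c : T -> bool) :
  (forall x y, e x y -> c x != c y) -> forall y a b, e y a -> e y b -> ~~ e a b.
Proof.
move=> hc y a b h1 h2; apply/negP => h3.
move: (hc _ _ h1) (hc _ _ h2) (hc _ _ h3).
by case: (c y); case: (c a); case: (c b).
Qed.

Lemma BC (T : finType) (e : rel T) (t : nat) (c : T -> bool) :
  symmetric e -> irreflexive e -> (forall x y, e x y -> c x != c y) ->
  induced_free_biclaw e t t ->
  forall x y (A B : {set T}), e x y ->
  A \subset Nb e y -> x \notin A -> B \subset Nb e x -> y \notin B ->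
  t <= #|A| -> t <= #|B| ->
  (forall a b, a \in A -> b \in B -> ~~ e a b) -> False.
Proof.
move=> sym irr hc free x y A B exy sA xA sB yB tA tB anti.
apply: free.
pose f := fun i : 'I_t => enum_val (widen_ord tA i).
pose g := fun j : 'I_t => enum_val (widen_ord tB j).
have fA i : f i \in A by apply: enum_valP.
have gB j : g j \in B by apply: enum_valP.
have fN i : e y (f i) by move/subsetP: sA => /(_ _ (fA i)); rewrite inE.
have gN j : e x (g j) by move/subsetP: sB => /(_ _ (gB j)); rewrite inE.
have eyx : e y x by rewrite sym.
have sc := same_col hc.
exists x, y, f, g.
split; first by apply/eqP => h; subst; rewrite irr in exy.
split; first by move=> i j /enum_val_inj /(congr1 val) /= /val_inj.
split; first by move=> i j /enum_val_inj /(congr1 val) /= /val_inj.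
split.
  move=> i; split; apply/eqP => h.
    by move: (fA i); rewrite h (negbTE xA).
  by move: (fN i); rewrite h irr.
split.
  move=> j; split; apply/eqP => h.
    by move: (gN j); rewrite h irr.
  by move: (gB j); rewrite h (negbTE yB).
split.
  move=> i j; apply/eqP => h.
  move: (hc _ _ (fN i)) (hc _ _ (gN j)) (hc _ _ exy); rewrite h.
  by case: (c x); case: (c y); case: (c (g j)).
do 3 (split => //).
split; first by move=> i; exact: sc eyx (fN i).
split; first by move=> j; exact: sc exy (gN j).
split; first by move=> i i'; exact: sc (fN i) (fN i').
split; first by move=> j j'; exact: sc (gN j) (gN j').
by move=> i j; apply: anti.
Qed.

Record Hyp (T : finType) (e : rel T) (t : nat) (c : T -> bool) : Prop := {
  hsym : symmetric e; hirr : irreflexive e;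
  hcol : forall x y, e x y -> c x != c y;
  hfree : induced_free_biclaw e t t;
  hdeg : forall v, 2*t*t+2*t+2 <= #|Nb e v|;
  ht : 0 < t }.

Definition B2 (T : finType) (e : rel T) (u : T) : {set T} :=
  [set w | (w == u) || e u w || [exists m, e u m && e m w]].
Definition S2 (T : finType) (e : rel T) (t : nat) (u : T) : {set T} :=
  [set w | t <= #|Nb e w :&: Nb e u|].
Definition NS (T : finType) (e : rel T) (s : seq T) : {set T} :=
  [set w | has (fun a => e a w) s].

Lemma card_U_le (T : finType) (A B : {set T}) : #|A :|: B| <= #|A| + #|B|.
Proof. by rewrite cardsU leq_subr. Qed.

Lemma card_NS (T : finType) (e : rel T) (X : {set T}) k (s : seq T) :
  (forall a, a \in s -> #|Nb e a :&: X| <= k) -> #|NS e s :&: X| <= size s * k.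
Proof.
elim: s => [|a s IH] H.
  rewrite (_ : NS e [::] :&: X = set0) ?cards0 //.
  by apply/setP => w; rewrite !inE.
have -> : NS e (a :: s) :&: X = (Nb e a :&: X) :|: (NS e s :&: X).
  by apply/setP => w; rewrite !inE /=; case: (e a w); case: (w \in X); case: (has _ _).
apply: leq_trans (card_U_le _ _) _.
rewrite /= mulSn leq_add // ?H ?mem_head // IH // => b bs.
by apply: H; rewrite inE bs orbT.
Qed.

Lemma inNb (T : finType) (e : rel T) v w : (w \in Nb e v) = e v w.
Proof. by rewrite inE. Qed.

Lemma step1 T e t c : @Hyp T e t c -> forall u y, e u y ->
  #|(Nb e y :\ u) :\: S2 e t u| < t.
Proof.
move=> H u y euy; rewrite ltnNge; apply/negP => /card_geqP [s [us ss sub]].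
have bnd : #|NS e s :&: Nb e u| <= t * t.-1.
  rewrite -{1}ss; apply: card_NS => a /sub; rewrite !inE => /andP [h _].
  by move: h; rewrite -ltnNge; case: (t) => //.
pose B := (Nb e u :\ y) :\: NS e s.
have cov : Nb e u \subset [set y] :|: (NS e s :&: Nb e u) :|: B.
  apply/subsetP => w wN; rewrite !inE.
  case: (w =P y) => //= _; move: wN; rewrite inE => ->.
  by case: (has _ _).
have := subset_leq_card cov.
have := card_U_le ([set y] :|: (NS e s :&: Nb e u)) B.
have := card_U_le [set y] (NS e s :&: Nb e u).
rewrite cards1 => h1 h2 h3.
have hd := hdeg H u.
have tB : t <= #|B|.
  have : 2*t*t+2*t+2 <= 1 + t * t.-1 + #|B| by lia.
  by case: t {H ss sub hd bnd h1 h2 h3} => //= n; nia.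
apply: (BC (hsym H) (hirr H) (hcol H) (hfree H) euy (A := [set x in s]) (B := B)).
- by apply/subsetP => a; rewrite inE => /sub; rewrite !inE => /andP [_ /andP [_]].
- by rewrite inE; apply/negP => /sub; rewrite !inE eqxx /= andbF.
- by apply/subsetP => b; rewrite /B !inE => /andP [_ /andP [_]].
- by rewrite /B !inE eqxx /= andbF.
- by rewrite cardsE (card_uniqP us) ss.
- by [].
- move=> a b; rewrite inE => as_; rewrite /B !inE => /andP [hb _].
  apply/negP => eab; move/negP: hb; apply.
  by apply/hasP; exists a.
Qed.

Lemma S2_B2 T e t c : @Hyp T e t c -> forall u s, s \in S2 e t u -> s \in B2 e u.
Proof.
move=> H u s; rewrite !inE => hs.
have : 0 < #|Nb e s :&: Nb e u| by apply: leq_trans (ht H) hs.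
case/card_gt0P => m; rewrite !inE => /andP [esm eum].
apply/orP; right; apply/existsP; exists m; rewrite eum /=.
by rewrite (hsym H).
Qed.

Lemma step3 T e t c : @Hyp T e t c -> forall u s z, e s z -> s \in S2 e t u ->
  #|Nb e z :&: ~: B2 e u| < t.
Proof.
move=> H u s z esz sS; rewrite ltnNge; apply/negP => tB.
have zA : z \notin Nb e s :&: Nb e u.
  rewrite !inE; apply/negP => /andP [_ euz].
  have : 0 < #|Nb e z :&: ~: B2 e u| by apply: leq_trans (ht H) tB.
  case/card_gt0P => b; rewrite !inE => /andP [ezb].
  apply/negP; rewrite negbK; apply/orP; right; apply/existsP; exists z.
  by rewrite euz ezb.
have ezs : e z s by rewrite (hsym H).
apply: (BC (hsym H) (hirr H) (hcol H) (hfree H) ezs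
  (A := Nb e s :&: Nb e u) (B := Nb e z :&: ~: B2 e u)).
- by apply/subsetP => a; rewrite !inE => /andP [].
- exact: zA.
- by apply/subsetP => a; rewrite !inE => /andP [].
- by rewrite in_setI in_setC (S2_B2 H sS) andbF.
- by move: sS; rewrite inE.
- exact: tB.
- move=> a b; rewrite !inE => /andP [_ eua] /andP [_ hb].
  apply/negP => eab; move/negP: hb; apply.
  by apply/orP; right; apply/existsP; exists a; rewrite eua eab.
Qed.

Lemma step4 T e t c : @Hyp T e t c -> forall u p1 p2 p3, e u p1 -> e p1 p2 -> e p2 p3 ->
  #|Nb e p3 :&: ~: B2 e u| < t * t.
Proof.
move=> H u p1 p2 p3 e1 e2 e3.
have [n tn] : exists n, t = n.+1 by case: t H => [[_ _ _ _ _]|n] //; exists n.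
case: (boolP (p2 \in S2 e t u)) => p2S.
  have := step3 H e3 p2S; rewrite tn => h; apply: leq_trans h _; nia.
pose A := (Nb e p1 :&: S2 e t u) :\ p2.
have hA : t <= #|A|.
  have cov : Nb e p1 \subset [set u] :|: ((Nb e p1 :\ u) :\: S2 e t u) :|: [set p2] :|: A.
    apply/subsetP => w wN; rewrite /A !in_setU !in_setD !in_setI !in_set1.
    rewrite wN /=.
    by case: (w == u); case: (w == p2); case: (w \in S2 e t u).
  have := subset_leq_card cov.
  have := card_U_le ([set u] :|: ((Nb e p1 :\ u) :\: S2 e t u) :|: [set p2]) A.
  have := card_U_le ([set u] :|: ((Nb e p1 :\ u) :\: S2 e t u)) [set p2].
  have := card_U_le [set u] ((Nb e p1 :\ u) :\: S2 e t u).
  have := step1 H e1; have := hdeg H p1.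
  rewrite !cards1; lia.
pose E := (Nb e p2 :\ p1) :\: [set w | [exists a in A, e a w]].
have hE : #|E| < t.
  rewrite ltnNge; apply/negP => tE.
  have e21 : e p2 p1 by rewrite (hsym H).
  apply: (BC (hsym H) (hirr H) (hcol H) (hfree H) e21 (A := A) (B := E)) => //.
  - by apply/subsetP => a; rewrite /A !inE => /andP [_ /andP []].
  - by rewrite /A !inE eqxx.
  - by apply/subsetP => a; rewrite /E !inE => /andP [_ /andP []].
  - by rewrite /E !inE eqxx /= andbF.
  - move=> a b aA; rewrite /E !inE => /andP [hb _].
    apply/negP => eab; move/negP: hb; apply.
    by apply/existsP; exists a; rewrite aA eab.
pose A3 := ((Nb e p2 :\ p3) :\: E) :\: Nb e u.
have hA3 : t <= #|A3|.
  have cov : Nb e p2 \subset [set p3] :|: E :|: (Nb e p2 :&: Nb e u) :|: A3.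
    apply/subsetP => w wN.
    case: (boolP (w == p3)) => [/eqP->|np3]; first by rewrite !in_setU set11.
    case: (boolP (w \in E)) => wE; first by rewrite !in_setU wE /= orbT.
    case: (boolP (w \in Nb e u)) => wu; first by rewrite !in_setU in_setI wN wu /= !orbT.
    rewrite in_setU; apply/orP; right.
    by rewrite /A3 in_setD wu in_setD wE in_setD1 np3 wN.
  have := subset_leq_card cov.
  have := card_U_le ([set p3] :|: E :|: (Nb e p2 :&: Nb e u)) A3.
  have := card_U_le ([set p3] :|: E) (Nb e p2 :&: Nb e u).
  have := card_U_le [set p3] E.
  have := hdeg H p2.
  move: p2S; rewrite inE -ltnNge.
  rewrite !cards1; lia.
have A3few : forall a, a \in A3 -> #|Nb e a :&: ~: B2 e u| <= n.
  move=> a; rewrite /A3 /E !inE => /andP [nua /andP [hE' /andP [_ e2a]]].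
  move: hE'; rewrite e2a andbT negb_and negbK.
  case/orP => [|/negPn/eqP ap1]; last by rewrite ap1 e1 in nua.
  case/existsP => s; rewrite /A !inE => /andP [/andP [_ /andP [_ sS]] esa].
  have := step3 H esa; move=> /(_ u); rewrite inE => /(_ sS).
  by rewrite tn ltnS.
case/card_geqP: hA3 => s3 [us3 ss3 sub3].
have bnd : #|NS e s3 :&: ~: B2 e u| <= t * n.
  rewrite -{1}ss3; apply: card_NS => a /sub3; exact: A3few.
pose B := (Nb e p3 :&: ~: B2 e u) :\: NS e s3.
have hB : #|B| < t.
  rewrite ltnNge; apply/negP => tB.
  have e32 : e p3 p2 by rewrite (hsym H).
  apply: (BC (hsym H) (hirr H) (hcol H) (hfree H) e32 (A := [set x in s3]) (B := B)) => //.
  - by apply/subsetP => a; rewrite inE => /sub3; rewrite /A3 !inE => /andP [_ /andP [_ /andP []]].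
  - by rewrite inE; apply/negP => /sub3; rewrite /A3 !inE eqxx /= !andbF.
  - by apply/subsetP => a; rewrite /B !inE => /andP [_ /andP []].
  - rewrite /B !in_setD in_setI in_setC negb_and; apply/orP; right.
    rewrite negb_and negbK; apply/orP; right.
    rewrite inE; apply/orP; right; apply/existsP; exists p1; by rewrite e1 e2.
  - by rewrite cardsE (card_uniqP us3) ss3.
  - move=> a b; rewrite inE => as3; rewrite /B !inE => /andP [hb _].
    apply/negP => eab; move/negP: hb; apply.
    by apply/hasP; exists a.
have cov : Nb e p3 :&: ~: B2 e u \subset B :|: (NS e s3 :&: ~: B2 e u).
  apply/subsetP => w wN; case/setIP: (wN) => _ nb.
  rewrite /B in_setU in_setD wN andbT in_setI nb andbT.
  by case: (w \in NS e s3).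
have := subset_leq_card cov.
have := card_U_le B (NS e s3 :&: ~: B2 e u).
move: hB bnd; rewrite tn; nia.
Qed.

Lemma B2_walk1 (T : finType) (e : rel T) u w : w \in B2 e u -> dist_le e u w 2.
Proof.
rewrite inE => /orP [/orP [/eqP ->|euw]|/existsP [m /andP [eum emw]]].
- by exists [::].
- by exists [:: w]; rewrite /= euw.
- by exists [:: m; w]; rewrite /= eum emw.
Qed.

Lemma B2_walk2 (T : finType) (e : rel T) v w : symmetric e ->
  w \in B2 e v -> dist_le e w v 2.
Proof.
move=> sym; rewrite inE => /orP [/orP [/eqP ->|evw]|/existsP [m /andP [evm emw]]].
- by exists [::].
- by exists [:: v]; rewrite /= sym evw.
- by exists [:: m; v]; rewrite /= sym emw sym evm.
Qed.

Lemma dist_cat (T : finType) (e : rel T) x y z a b :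
  dist_le e x y a -> dist_le e y z b -> dist_le e x z (a + b).
Proof.
move=> [s1 [p1 l1 z1]] [s2 [p2 l2 z2]]; exists (s1 ++ s2); split.
- by rewrite cat_path p1 l1 p2.
- by rewrite last_cat l1 l2.
- by rewrite size_cat leq_add.
Qed.

Lemma Kcontra T e t c : @Hyp T e t c -> forall u p1 p2 p3 q2 q1 v,
  e u p1 -> e p1 p2 -> e p2 p3 -> e p3 q2 -> e q2 q1 -> e q1 v ->
  ~ dist_le e u v 4 -> False.
Proof.
move=> H u p1 p2 p3 q2 q1 v e1 e2 e3 e4 e5 e6 nd.
have sym := hsym H.
have h1 := step4 H e1 e2 e3.
have h2 : #|Nb e p3 :&: ~: B2 e v| < t * t.
  by apply: (step4 H (p1 := q1) (p2 := q2)); rewrite sym.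
have cov : Nb e p3 \subset (Nb e p3 :&: ~: B2 e u) :|: (Nb e p3 :&: ~: B2 e v).
  apply/subsetP => w wN; rewrite in_setU !in_setI !in_setC wN /=.
  case: (boolP (w \in B2 e u)) => //= wu.
  case: (boolP (w \in B2 e v)) => //= wv.
  exfalso; apply: nd.
  exact: (dist_cat (B2_walk1 wu) (B2_walk2 sym wv)).
have := subset_leq_card cov.
have := card_U_le (Nb e p3 :&: ~: B2 e u) (Nb e p3 :&: ~: B2 e v).
have := hdeg H p3.
lia.
Qed.

Lemma six T e t c : @Hyp T e t c -> forall u v, dist_le e u v 6 -> dist_le e u v 5.
Proof.
move=> H u v [s [ps ls zs]].
case: (leqP (size s) 5) => hs; first by exists s.
destruct (classic (dist_le e u v 4)) as [d4|nd4].
  by case: d4 => s' [p' l' z']; exists s'; split => //; apply: leq_trans z' _.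
exfalso.
case: s ps ls zs hs => [|a1 [|a2 [|a3 [|a4 [|a5 [|a6 [|a7 s]]]]]]] //= ps ls zs hs.
move: ps => /and4P [e1 e2 e3 /and4P [e4 e5 e6 _]].
subst v.
exact: (Kcontra H e1 e2 e3 e4 e5 e6 nd4).
Qed.

Theorem mainTheorem8 :
  exists C5 : nat -> nat,
    forall t : nat, 0 < t ->
    forall (T : finType) (e : rel T),
      simple_graph e -> connected_graph e -> bipartite e ->
      min_degree_ge e (C5 t) ->
      induced_free_biclaw e t t ->
      diameter_le e 5.
Proof.
exists (fun t => 2*t*t+2*t+2).
move=> t tpos T e [sym irr] conn [c hc] deg free.
have H : Hyp e t c by split.
move=> x y.
have := conn x y; case/connectP => p pp ->.
elim/last_ind: p pp => [|s z IH].
  by move=> _; exists [::].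
rewrite rcons_path => /andP [ps ez].
rewrite last_rcons.
apply: (six H).
case: (IH ps) => w [pw lw zw].
exists (rcons w z); split.
- by rewrite rcons_path pw lw ez.
- by rewrite last_rcons.
- by rewrite size_rcons.
Qed.
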